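(* No flower is a Burling graph.
   Context: Graphs are finite, without loops or multiple edges. A hole in a graph is an induced cycle of length at least $4$. A flower is a graph $G$ consisting of a hole $H$ together with, for every edge $e$ of $H$, a hole $H_e$ of $G$ containing $e$, such that $V(H)\cap V(H_e)$ is exactly the set of the two endpoints of $e$; for all distinct edges $e,f$ of $H$, $V(H_e)\cap V(H_f)$ is the set of common endpoints of $e$ and $f$; and the vertices and edges of $G$ are exactly those of the holes $H_e$. In a rooted tree $T$ with root $r$, each non-root vertex $v$ has a parent $p(v)$; children, leaves, ancestors and descendants are as usual. A branch is a sequence $v_1\dots v_k$ ($k\ge0$) with $v_i$ the parent of $v_{i+1}$; it starts at $v_1$. A Burling tree is a 4-tuple $(T,r,\ell,c)$: $T$ a rooted tree with root $r$; $\ell$ assigns to each non-leaf vertex $v$ one of its children $\ell(v)$ (the last-born of $v$); $c$ assigns to every vertex $v$ that is neither the root nor a last-born the vertex-set of a (possibly empty) branch starting at $\ell(p(v))$, and $c(v)=\emptyset$ if $v$ is the root or a last-born. The oriented graph fully derived from it has vertex-set $V(T)$ and an arc $uv$ iff $v\in c(u)$. A (non-oriented) graph is a Burling graph if it is isomorphic to an induced subgraph of the underlying graph of the oriented graph fully derived from some Burling tree. *)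

(* Defs.v *)
(* Finite simple graphs are symmetric irreflexive relations
   [adj : rel V] on a finType V. *)
From mathcomp Require Import all_boot.
Set Implicit Arguments. Unset Strict Implicit. Unset Printing Implicit Defensive.

Section Graphs.
Variables (V : finType) (adj : rel V).

(* A hole: an induced cycle of length >= 4, given by its cyclic sequence of
   (distinct) vertices; two vertices of the hole are adjacent in G exactly
   when they are cyclically consecutive in the sequence. *)
Definition is_hole (s : seq V) : Prop :=
  [/\ uniq s, 4 <= size s &
    forall x y, x \in s -> y \in s ->
      adj x y = (index y s == (index x s).+1 %% size s)
             || (index x s == (index y s).+1 %% size s)].

(* The edges of a hole s, each given as its (2-element) set of endpoints
   (the hole is induced, so its edges are the G-edges inside it). *)
Definition hole_edges (s : seq V) : {set {set V}} :=
  [set [set x; y] | x in s, y in s & adj x y].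

Definition flower : Prop :=
  exists (H : seq V) (He : {set V} -> seq V),
  [/\ is_hole H,
      (forall e, e \in hole_edges H ->
         [/\ is_hole (He e), e \subset [set z in He e] &
             [set z in H] :&: [set z in He e] = e]),
      (forall e f, e \in hole_edges H -> f \in hole_edges H -> e != f ->
         [set z in He e] :&: [set z in He f] = e :&: f),
      (forall v, exists2 e, e \in hole_edges H & v \in He e) &
      (forall u v, adj u v ->
         exists2 e, e \in hole_edges H & (u \in He e) && (v \in He e))].
End Graphs.

(* The rooted tree T is given by its root r
   and a parent function par with par r = r, every vertex reaching r by
   iterating par; the children of v are the u <> r with par u = v.
   [l] is the last-born map (only meaningful on non-leaves), [c] the map c. *)
Definition burling_tree (U : finType) (r : U) (par l : U -> U)
  (c : U -> {set U}) : Prop :=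
  [/\ par r = r,
      (forall v, exists n, iter n par v = r),
      (forall v, (exists u, (u != r) && (par u == v)) ->
                 l v != r /\ par (l v) = v),
      (forall v, (v == r) || (l (par v) == v) -> c v = set0) &
      (forall v, v != r -> l (par v) != v ->
         exists s : seq U, c v = [set x in s] /\
           (s = [::] \/
            exists t, s = l (par v) :: t /\
              path (fun a b => (b != r) && (par b == a)) (l (par v)) t))].

(* Underlying (non-oriented) graph of the oriented graph fully derived from
   a Burling tree: arc uv iff v \in c u. *)
Definition burling_adj (U : finType) (c : U -> {set U}) : rel U :=
  fun u v => (v \in c u) || (u \in c v).

Definition burling_graph (V : finType) (adj : rel V) : Prop :=
  exists (U : finType) (r : U) (par l : U -> U) (c : U -> {set U}),
    burling_tree r par l c /\
    exists f : V -> U, injective f /\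
      forall x y, adj x y = burling_adj c (f x) (f y).

(* Main.v *)
Require Import Defs.
From mathcomp Require Import all_boot zify.
From Stdlib Require Import Classical.
Set Implicit Arguments. Unset Strict Implicit. Unset Printing Implicit Defensive.
Section Lin.
Variables (V : finType) (adj : rel V).
Hypothesis Hsym : symmetric adj.
Hypothesis Hirr : irreflexive adj.

Record lin (s : seq V) (m : nat) (t : nat -> V) : Prop := Lin {
  lin_m : 4 <= m;
  lin_wrap : t m = t 0;
  lin_in : forall i, i < m -> t i \in s;
  lin_surj : forall x, x \in s -> exists2 i, i < m & t i = x;
  lin_inj : forall i j, i < m -> j < m -> t i = t j -> i = j;
  lin_next : forall i, i < m -> adj (t i) (t i.+1);
  lin_nadj : forall i j, i < m -> j < m -> adj (t i) (t j) ->
     j = i.+1 \/ i = j.+1 \/ (i = 0 /\ j = m.-1) \/ (j = 0 /\ i = m.-1) }.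

Lemma modS_small x n : x < n -> x.+1 %% n = if x.+1 == n then 0 else x.+1.
Proof.
move=> xn; case: eqP => [->|ne]; first by rewrite modnn.
by rewrite modn_small //; lia.
Qed.

Lemma lin_of_hole s a : is_hole adj s -> a \in s ->
  exists m t, lin s m t /\ t 0 = a.
Proof.
case=> us szs hadj ain.
set n := size s. set ia := index a s. rewrite -/n in szs hadj.
have ian : ia < n by rewrite index_mem.
pose g k := if ia + k < n then ia + k else ia + k - n.
pose t k := nth a s (g k).
have gn k : k <= n -> g k < n by rewrite /g; case: ifP; lia.
have tin k : k <= n -> t k \in s by move=> kn; apply: mem_nth; apply: gn.
have idx k : k <= n -> index (t k) s = g k by move=> kn; apply: index_uniq => //; apply: gn.
have t0 : t 0 = a by rewrite /t /g addn0 ian nth_index.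
exists n, t; split => //; first split.
- by [].
- rewrite t0 /t /g (_ : ia + n < n = false); last lia.
  by rewrite (_ : ia + n - n = ia) ?nth_index //; lia.
- by move=> i il; apply: tin; lia.
- move=> x xs; exists (if index x s < ia then index x s + n - ia else index x s - ia).
    have : index x s < n by rewrite index_mem.
    case: ifP; lia.
  rewrite /t /g.
  have ixn : index x s < n by rewrite index_mem.
  have -> : (if ia + (if index x s < ia then index x s + n - ia else index x s - ia) < n
       then ia + (if index x s < ia then index x s + n - ia else index x s - ia)
       else ia + (if index x s < ia then index x s + n - ia else index x s - ia) - n) = index x s.
    case: (ltnP (index x s) ia) => h2; case: ifP => h1; lia.
  by rewrite nth_index.
- move=> i j il jl tij.
  have : index (t i) s = index (t j) s by rewrite tij.
  rewrite !idx; try lia. rewrite /g. case: ifP; case: ifP; lia.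
- move=> i il. have gi := gn i. have gj := gn i.+1.
  rewrite hadj; try (apply: tin; lia).
  rewrite !idx; try lia.
  rewrite !modS_small; try (apply: gn; lia).
  rewrite /g. apply/orP; left. apply/eqP.
  case: ifP; case: ifP; case: ifP; lia.
- move=> i j il jl.
  rewrite hadj; try (apply: tin; lia).
  rewrite !idx; try lia.
  rewrite !modS_small; try (apply: gn; lia).
  rewrite /g.
  case: ifP; case: ifP; case: ifP; case: ifP; move=> h1 h2 h3 h4 /orP [] /eqP; lia.
Qed.


Lemma lin_rev s m t : lin s m t ->
  lin s m (fun k => if k == 0 then t 0 else t (m - k)).
Proof.
case=> m4 wr tin surj inj nxt nadj.
have tt k : k < m -> (if k == 0 then t 0 else t (m - k)) = t (if k == 0 then 0 else m - k).
  by case: (k == 0).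
split => //.
- by rewrite (_ : m == 0 = false) ?subnn //; lia.
- move=> i il; rewrite tt //; apply: tin; case: eqP; lia.
- move=> x /surj [i il <-]. case: (i =P 0) => [->|i0]; first by exists 0; rewrite //=; lia.
  exists (m - i); first lia. rewrite (_ : (m - i == 0) = false); last lia.
  by rewrite (_ : m - (m - i) = i) //; lia.
- move=> i j il jl; rewrite !tt // => /inj; case: eqP; case: eqP; lia.
- move=> i il.
  have -> : (if i == 0 then t 0 else t (m - i)) = t (m - i).
    by case: eqP => // ->; rewrite subn0 wr.
  have -> : (if i.+1 == 0 then t 0 else t (m - i.+1)) = t (m - i.+1) by [].
  rewrite Hsym (_ : m - i = (m - i.+1).+1); last lia.
  apply: nxt; lia.
- move=> i j il jl; rewrite !tt //.
  have a1 : (if i == 0 then 0 else m - i) < m by case: eqP; lia.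
  have a2 : (if j == 0 then 0 else m - j) < m by case: eqP; lia.
  move=> /(nadj _ _ a1 a2). case: eqP; case: eqP; lia.
Qed.

Lemma ivt (P : V -> Prop) (t : nat -> V) i j : i <= j -> P (t i) -> ~ P (t j) ->
  exists k, [/\ i <= k, k < j, P (t k) & ~ P (t k.+1)].
Proof.
move=> ij Pi; elim: j ij => [|j IH] ij Pj.
  by move: Pi; rewrite (_ : i = 0) //; lia.
case: (ltnP i j.+1) => h; last first.
  by move: Pi; rewrite (_ : i = j.+1) //; lia.
case: (classic (P (t j))) => Pj'.
  by exists j; split => //; lia.
have [k [h1 h2 h3 h4]] := IH ltac:(lia) Pj'.
by exists k; split => //; lia.
Qed.

Lemma lin_edge s a u : is_hole adj s -> a \in s -> u \in s -> adj a u ->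
  exists m t, [/\ lin s m t, t 0 = a & t 1 = u].
Proof.
move=> hs ain uin au.
have [m [t [lt t0]]] := lin_of_hole hs ain.
have [j jm tj] := lin_surj lt uin.
have m4 := lin_m lt.
have : adj (t 0) (t j) by rewrite t0 tj.
move=> /(lin_nadj lt) h.
have {h} : j = 1 \/ j = m.-1.
  have: 0 < m by lia.
  move=> m0; move: (h m0 jm) => h'.
  case: h' => [->|[//|[[_ ->]|[j0 _]]]]; [by left | by right |].
  by move: au; rewrite -t0 -tj j0 Hirr.
case=> jE.
  by exists m, t; split => //; rewrite -tj jE.
exists m, (fun k => if k == 0 then t 0 else t (m - k)); split.
- exact: lin_rev.
- by [].
- by rewrite /= -tj jE; congr t; lia.
Qed.

End Lin.
Section Tree.
Variables (U : finType) (r : U) (par l : U -> U) (c : U -> {set U}).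
Hypothesis Hr : par r = r.
Hypothesis Hreach : forall v, exists n, iter n par v = r.
Hypothesis Hl : forall v, (exists u, (u != r) && (par u == v)) -> l v != r /\ par (l v) = v.
Hypothesis Hc0 : forall v, (v == r) || (l (par v) == v) -> c v = set0.
Hypothesis Hc : forall v, v != r -> l (par v) != v ->
         exists s : seq U, c v = [set x in s] /\
           (s = [::] \/
            exists t, s = l (par v) :: t /\
              path (fun a b => (b != r) && (par b == a)) (l (par v)) t).

Definition A x y := exists n, iter n par y = x.

Lemma A_refl x : A x x. Proof. by exists 0. Qed.
Lemma A_trans x y z : A x y -> A y z -> A x z.
Proof. by move=> [n <-] [k <-]; exists (n + k); rewrite iterD. Qed.
Lemma A_par x : A (par x) x. Proof. by exists 1. Qed.
Lemma A_step x y : A x y -> x <> y -> A x (par y).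
Proof. by case=> [[|n] <-] // _; exists n; rewrite iterSr. Qed.
Lemma A_total x y z : A x z -> A y z -> A x y \/ A y x.
Proof.
move=> [n xE] [k yE]; case: (leqP n k) => h.
  by right; exists (k - n); rewrite -xE -iterD subnK.
by left; exists (n - k); rewrite -yE -iterD subnK // ltnW.
Qed.
Lemma iter_r n : iter n par r = r.
Proof. by elim: n => //= n ->. Qed.

Lemma reachb v : exists n, iter n par v == r.
Proof. by have [n e] := Hreach v; exists n; apply/eqP. Qed.
Definition dep v := ex_minn (reachb v).
Lemma dep_spec v : iter (dep v) par v = r /\ forall n, iter n par v = r -> dep v <= n.
Proof.
rewrite /dep; case: ex_minnP => n /eqP Hn Hmin; split=> // k Hk; apply: Hmin; exact/eqP.
Qed.
Lemma dep_par v : v <> r -> dep v = (dep (par v)).+1.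
Proof.
move=> vr; have [e1 m1] := dep_spec v; have [e2 m2] := dep_spec (par v).
have d0 : dep v <> 0 by move=> d; move: e1; rewrite d /= => e; exact: vr e.
have h1 : dep (par v) <= (dep v).-1.
  apply: m2; have : iter ((dep v).-1).+1 par v = r.
    by rewrite prednK //; lia.
  by rewrite iterSr.
have h2 : dep v <= (dep (par v)).+1 by apply: m1; rewrite iterSr.
lia.
Qed.
Lemma dep_lt n x y : iter n par y = x -> x <> y -> dep x < dep y.
Proof.
elim: n y => [|n IH] y; first by move=> /= -> .
rewrite iterSr => e xy.
case: (y =P r) => [yr|yr].
  by move: e; rewrite yr Hr iter_r => e; case: xy; rewrite -e yr.
rewrite (dep_par yr); case: (x =P par y) => [->|ne]; first by [].
by apply: ltn_trans (IH _ e ne) _.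
Qed.
Lemma A_lt x y : A x y -> x <> y -> dep x < dep y.
Proof. by move=> [n e]; apply: dep_lt e. Qed.
Lemma A_antisym x y : A x y -> A y x -> x = y.
Proof.
move=> h1 h2; case: (x =P y) => // ne.
have := A_lt h1 ne; have := A_lt h2 (nesym ne); lia.
Qed.
Lemma sib x y : x <> r -> y <> r -> par x = par y -> A x y -> x = y.
Proof.
move=> xr yr pxy h; case: (x =P y) => // ne.
have := A_lt h ne; rewrite (dep_par xr) (dep_par yr) pxy; lia.
Qed.

Definition child a b := (b != r) && (par b == a).

Lemma path_anc h t : path child h t -> forall v, v \in h :: t -> A h v.
Proof.
elim: t h => [|h' t IH] h /=.
  by move=> _ v; rewrite inE => /eqP ->; apply: A_refl.
move=> /andP [/andP [_ /eqP ph] pt] v; rewrite inE => /orP [/eqP ->|vin].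
  exact: A_refl.
by apply: A_trans (IH _ pt _ vin); rewrite -ph; apply: A_par.
Qed.

Lemma path_cmp h t : path child h t -> forall v w, v \in h :: t -> w \in h :: t ->
  A v w \/ A w v.
Proof.
elim: t h => [|h' t IH] h /=.
  move=> _ v w; rewrite !inE => /eqP -> /eqP ->; left; exact: A_refl.
move=> /andP [/andP [_ /eqP ph] pt] v w.
move=> vin win; move: vin; rewrite in_cons => /orP hv; move: win; rewrite in_cons => /orP hw.
case: hv => [/eqP ->|vin]; case: hw => [/eqP ->|win].
all: try by left; apply: A_refl.
all: try by (left; apply: A_trans (path_anc pt win); rewrite -ph; apply: A_par).
all: try by (right; apply: A_trans (path_anc pt vin); rewrite -ph; apply: A_par).
by apply: (IH h' pt v w vin win).
Qed.

Lemma path_closed h t : path child h t -> forall x v, A h x -> A x v -> v \in h :: t ->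
  x \in h :: t.
Proof.
elim: t h => [|h' t IH] h /=.
  move=> _ x v hx xv; rewrite !inE => /eqP vE; subst v.
  by rewrite (A_antisym hx xv).
move=> /andP [/andP [_ /eqP ph] pt] x v hx xv.
rewrite inE => /orP [/eqP vE|vin].
  by subst v; rewrite (A_antisym hx xv) inE eqxx.
case: (x =P h) => [->|xh]; first by rewrite inE eqxx.
rewrite inE; apply/orP; right.
have [xh'|h'x] := A_total xv (path_anc pt vin).
  case: (x =P h') => [->|ne]; first by rewrite inE eqxx.
  have := A_step xh' ne; rewrite ph => xh2.
  by case: xh; apply: A_antisym.
exact: IH h'x xv vin.
Qed.

Definition lb u := l (par u).

Lemma cS u v : v \in c u -> [/\ u != r, lb u != u, lb u != r, par (lb u) = par u &
   exists t, c u = [set x in lb u :: t] /\ path child (lb u) t].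
Proof.
case: (boolP ((u == r) || (l (par u) == u))) => H.
  by rewrite Hc0 // in_set0.
move: H; rewrite negb_or => /andP [ur lu] vin.
have [s [cs [s0|[t [st pt]]]]] := Hc ur lu.
  by move: vin; rewrite cs s0 inE.
have [h1 h2] : l (par u) != r /\ par (l (par u)) = par u.
  by apply: Hl; exists u; rewrite ur eqxx.
by split => //; exists t; rewrite cs st.
Qed.

Lemma c_anc u v : v \in c u -> A (lb u) v.
Proof.
move=> vin; have [_ _ _ _ [t [ce pt]]] := cS vin.
by move: vin; rewrite ce inE => /(path_anc pt).
Qed.
Lemma c_ancp u v : v \in c u -> A (par u) v.
Proof.
move=> vin; have [_ _ _ pe _] := cS vin.
by apply: A_trans (c_anc vin); rewrite -pe; apply: A_par.
Qed.
Lemma c_cmp u v w : v \in c u -> w \in c u -> A v w \/ A w v.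
Proof.
move=> vin win; have [_ _ _ _ [t [ce pt]]] := cS vin.
by move: vin win; rewrite ce !inE; apply: path_cmp.
Qed.
Lemma c_closed u v x : v \in c u -> A (lb u) x -> A x v -> x \in c u.
Proof.
move=> vin hx xv; have [_ _ _ _ [t [ce pt]]] := cS vin.
by move: vin; rewrite ce !inE => vin; apply: path_closed pt _ _ hx xv vin.
Qed.
Lemma c_head u v : v \in c u -> lb u \in c u.
Proof. by move=> vin; have [_ _ _ _ [t [ce pt]]] := cS vin; rewrite ce inE mem_head. Qed.

Lemma F1 p q : (q \in c p) || (p \in c q) -> ~ A p q.
Proof.
case/orP => qin pq.
  have [pr lp lr pe _] := cS qin.
  have [h|h] := A_total (c_anc qin) pq.
    by move: lp; rewrite (sib (elimN eqP lr) (elimN eqP pr) pe h) eqxx.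
  by move: lp; rewrite -(sib (elimN eqP pr) (elimN eqP lr) (esym pe) h) eqxx.
have [qr lq lr pe _] := cS qin.
have h := A_trans (c_anc qin) pq.
by move: lq; rewrite (sib (elimN eqP lr) (elimN eqP qr) pe h) eqxx.
Qed.

Lemma LB x p q : ~ A x p -> A x q -> q <> x -> (q \in c p) || (p \in c q) ->
  (x \in c p) /\ (q \in c p).
Proof.
move=> nxp xq qx /orP [qin|pin]; last first.
  exfalso; have [_ _ _ pe _] := cS pin.
  apply: nxp; apply: A_trans (A_step xq (nesym qx)) _.
  exact: c_ancp pin.
split=> //.
have [pr lp lr pe _] := cS qin.
have [h|h] := A_total (c_anc qin) xq.
  exact: c_closed qin h xq.
case: (x =P lb p) => [->|ne]; first exact: c_head qin.
exfalso; apply: nxp; have := A_step h ne; rewrite pe => h2.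
by apply: A_trans h2 (A_par p).
Qed.

Lemma dep_lb u v : v \in c u -> dep (lb u) = dep u.
Proof.
move=> vin; have [ur lu lr pe _] := cS vin.
by rewrite (dep_par (elimN eqP lr)) (dep_par (elimN eqP ur)) pe.
Qed.

Lemma Darc p q : q \in c p -> dep p <= dep q /\ (dep p = dep q -> c q = set0).
Proof.
move=> qin; have [pr lp lr pe _] := cS qin.
have dl := dep_lb qin.
case: (lb p =P q) => [e|ne].
  split; first by rewrite -e dl.
  move=> _; apply: Hc0; apply/orP; right.
  by rewrite -e /lb in pe *; rewrite pe.
have := A_lt (c_anc qin) ne; rewrite dl => h; split; lia.
Qed.

Lemma tri a r' u : r' \in c a -> A r' u -> a \in c u -> False.
Proof.
move=> rin ru ain.
have [ar la lar pea _] := cS rin.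
have [ur lu lur peu _] := cS ain.
have hau : A (par a) u.
  by apply: A_trans (A_trans (c_anc rin) ru); rewrite -pea; apply: A_par.
have hua : A (par u) a := c_ancp ain.
have nua : ~ A u a by apply: F1; rewrite ain.
have nau : ~ A a u by apply: F1; rewrite ain orbT.
have pe : par a = par u.
  have [h|h] := A_total (A_par u) hau.
    have ne : par a <> u by move=> e; apply: nua; rewrite -e; apply: A_par.
    by apply: A_antisym (A_step hau ne) h.
  have ne : par u <> a by move=> e; apply: nau; rewrite -e; apply: A_par.
  by apply: A_antisym h (A_step hua ne).
have e : lb u = a.
  apply: sib (elimN eqP lur) (elimN eqP ar) _ (c_anc ain).
  by rewrite peu pe.
move: rin; rewrite Hc0 ?inE //; apply/orP; right.
by rewrite /lb pe -/(lb u) e.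
Qed.


Ltac nlia := repeat match goal with
 | H : is_true (in_mem _ _) |- _ => clear H
 | H : is_true (negb (in_mem _ _)) |- _ => clear H
 | H : A _ _ |- _ => clear H
 | H : ~ A _ _ |- _ => clear H
 end; lia.

Variables (V : finType) (adj : rel V).
Hypothesis Hsym : symmetric adj.
Hypothesis Hirr : irreflexive adj.
Variable f : V -> U.
Hypothesis finj : injective f.
Hypothesis hadj : forall x y, adj x y = burling_adj c (f x) (f y).

Lemma F1V x y : adj x y -> ~ A (f x) (f y) /\ ~ A (f y) (f x).
Proof.
rewrite hadj /burling_adj => h; split; apply: F1 => //.
by rewrite orbC.
Qed.

Lemma LBV x p q : ~ A (f x) (f p) -> A (f x) (f q) -> q <> x -> adj p q ->
  [/\ adj p x, f x \in c (f p) & f q \in c (f p)].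
Proof.
move=> h1 h2 qx; rewrite hadj /burling_adj => h3.
have fq : f q <> f x by move=> /finj.
have [h4 h5] := LB h1 h2 fq h3.
by split => //; rewrite hadj /burling_adj h4.
Qed.

Lemma source X : is_hole adj X ->
  exists al be, [/\ al \in X, be \in X, al <> be & A (f al) (f be)].
Proof.
move=> hX.
have [x0 x0in] : exists x0, x0 \in X.
  by case: hX; case: X => [|x X] //= _ _ _; exists x; rewrite mem_head.
case: (@arg_minnP V x0 (fun i => i \in X) (fun i => dep (f i)) x0in) => u uin umin.
have [m [t [lt t0]]] := lin_of_hole hX uin.
have m4 := lin_m lt.
have tin k : k < m -> t k \in X by move=> km; exact: (lin_in lt km).
have fin : forall z v w, v <> w -> f v \in c (f z) -> f w \in c (f z) -> v \in X -> w \in X ->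
    exists al be, [/\ al \in X, be \in X, al <> be & A (f al) (f be)].
  move=> z v w vw vin win vX wX.
  have [h|h] := c_cmp vin win.
    by exists v, w.
  by exists w, v; split => // e; apply: vw.
have a01 : adj (t 0) (t 1) by apply: (lin_next lt); nlia.
have a12 : adj (t 1) (t 2) by apply: (lin_next lt); nlia.
have am : adj (t m.-1) (t 0).
  have h := lin_next lt (_ : m.-1 < m); rewrite prednK in h; try nlia.
  by rewrite -(lin_wrap lt) h.
have d1 : t 1 <> t m.-1 by move=> /(lin_inj lt); nlia.
have d2 : t 0 <> t 2 by move=> /(lin_inj lt); nlia.
case: (c (f u) =P set0) => [c0|cn].
- have h1 : f u \in c (f (t 1)).
    move: a01; rewrite hadj /burling_adj t0 c0 inE /=; by [].
  have [dl _] := Darc h1.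
  have e1 : dep (f (t 1)) = dep (f u).
    have := umin (t 1) (tin 1 ltac:(nlia)); nlia.
  have h2 : f (t 2) \in c (f (t 1)).
    move: a12; rewrite hadj /burling_adj => /orP [//|h].
    have [dl2 de2] := Darc h.
    have := umin (t 2) (tin 2 ltac:(nlia)) => dd.
    by move: h1; rewrite de2; [rewrite inE | nlia].
  apply: (fin (t 1) u (t 2)) => //; try (apply: tin; nlia).
  by rewrite -t0.
- have out : forall y, y \in X -> adj u y -> f y \in c (f u).
    move=> y yX; rewrite hadj /burling_adj => /orP [//|h].
    have [dl de] := Darc h.
    by exfalso; apply: cn; apply: de; have := umin y yX; nlia.
  apply: (fin u (t 1) (t m.-1)) => //; try (apply: tin; nlia).
  + by apply: out; [apply: tin; nlia | rewrite -t0].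
  + by apply: out; [apply: tin; nlia | rewrite -t0 Hsym].
Qed.


Lemma apex_lin X m t : lin adj X m t ->
  (exists w, [/\ w \in X, A (f (t 0)) (f w) & w <> t 0]) ->
  [/\ forall k, 2 <= k -> k <= m.-2 -> A (f (t 0)) (f (t k)) /\ t k <> t 0,
      f (t 0) \in c (f (t 1)) & f (t 2) \in c (f (t 1))].
Proof.
move=> lt [w [wX aw wa]].
have m4 := lin_m lt.
have [j jm tj] := lin_surj lt wX.
set a := t 0 in aw wa *.
pose P v := A (f a) (f v) /\ v <> a.
have a01 : adj (t 0) (t 1) by apply: (lin_next lt); nlia.
have am : adj (t m.-1) (t 0).
  have h := lin_next lt (_ : m.-1 < m); rewrite prednK in h; try nlia.
  by rewrite -(lin_wrap lt) h.
have j0 : j <> 0 by move=> e; apply: wa; rewrite -tj e.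
have j1 : j <> 1 by move=> e; have [h _] := F1V a01; apply: h; rewrite -tj e in aw.
have jm1 : j <> m.-1 by move=> e; have [_ h] := F1V am; apply: h; rewrite -tj e in aw.
have bad : forall i, 2 <= i -> i <= m.-2 -> ~ P (t i) -> forall q, adj (t i) q -> P q -> False.
  move=> i i2 im nP q tq [Pq1 Pq2].
  have tia : t i <> a by move=> /(lin_inj lt); nlia.
  have nA : ~ A (f a) (f (t i)) by move=> h; apply: nP; split.
  have [h _ _] := LBV nA Pq1 Pq2 tq.
  have im' : i < m by nlia.
  have m0 : 0 < m by nlia.
  by move: (lin_nadj lt im' m0 h); nlia.
have Pall : forall k, 2 <= k -> k <= m.-2 -> P (t k).
  move=> k k2 km; apply: NNPP => nPk.
  have Pj : P (t j) by rewrite tj.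
  case: (leqP j k) => jk.
    have [i [h1 h2 h3 h4]] := ivt (P := P) jk Pj nPk.
    by apply: (bad i.+1) h4 (t i) _ h3; try nlia; rewrite Hsym; apply: (lin_next lt); nlia.
  have nnPj : ~ ~ P (t j) by [].
  have [i [h1 h2 h3 h4]] := ivt (P := fun v => ~ P v) (ltnW jk) nPk nnPj.
  by apply: (bad i) h3 (t i.+1) _ (NNPP _ h4); try nlia; apply: (lin_next lt); nlia.
split => //.
- have a12 : adj (t 1) (t 2) by apply: (lin_next lt); nlia.
  have [_ h _] := LBV (x := a) (F1V a01).1 (Pall 2 (leqnn 2) ltac:(nlia)).1 (Pall 2 (leqnn 2) ltac:(nlia)).2 a12.
  exact: h.
- have a12 : adj (t 1) (t 2) by apply: (lin_next lt); nlia.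
  have [_ _ h] := LBV (x := a) (F1V a01).1 (Pall 2 (leqnn 2) ltac:(nlia)).1 (Pall 2 (leqnn 2) ltac:(nlia)).2 a12.
  exact: h.
Qed.

Lemma esc X m t x : lin adj X m t -> x \notin X -> A (f x) (f (t 2)) -> ~ A (f x) (f (t 0)) ->
  (forall p, p \in X -> adj p x -> p = t 1) -> False.
Proof.
move=> lt xX h2 h0 hp.
have m4 := lin_m lt.
have m2 : 2 <= m by nlia.
have hm : ~ A (f x) (f (t m)) by rewrite (lin_wrap lt).
have [k [k1 k2 k3 k4]] := ivt (P := fun v => A (f x) (f v)) m2 h2 hm.
- have tkx : t k <> x by move=> e; move: xX; rewrite -e (lin_in lt) //.
  have ad : adj (t k.+1) (t k) by rewrite Hsym; apply: (lin_next lt).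
  have [h _ _] := LBV k4 k3 tkx ad.
  have inX : t k.+1 \in X.
    case: (ltnP k.+1 m) => e; first exact: (lin_in lt).
    by rewrite (_ : k.+1 = m) ?(lin_wrap lt) ?(lin_in lt) //; nlia.
  have := hp _ inX h.
  case: (ltnP k.+1 m) => e.
    by move=> /(lin_inj lt); nlia.
  rewrite (_ : k.+1 = m); last nlia.
  by rewrite (lin_wrap lt) => /(lin_inj lt); nlia.
Qed.

Lemma sep X m t x : lin adj X m t -> x \notin X -> A (f x) (f (t 0)) ->
  (forall p, p \in X -> ~~ adj p x) -> forall j, j < m -> A (f x) (f (t j)).
Proof.
move=> lt xX h0 hp j jm; apply: NNPP => nj.
have [k [k1 k2 k3 k4]] := ivt (P := fun v => A (f x) (f v)) (leq0n j) h0 nj.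
have tkx : t k <> x by move=> e; move: xX; rewrite -e (lin_in lt) //; nlia.
have ad : adj (t k.+1) (t k) by rewrite Hsym; apply: (lin_next lt); nlia.
have [h _ _] := LBV k4 k3 tkx ad.
have km : k.+1 < m by nlia.
by move: (hp (t k.+1) (lin_in lt km)); rewrite h.
Qed.


Variables (H : seq V) (He : {set V} -> seq V).
Hypothesis hH : is_hole adj H.
Hypothesis hE : forall e, e \in hole_edges adj H ->
         [/\ is_hole adj (He e), e \subset [set z in He e] &
             [set z in H] :&: [set z in He e] = e].
Hypothesis hEF : forall e f, e \in hole_edges adj H -> f \in hole_edges adj H -> e != f ->
         [set z in He e] :&: [set z in He f] = e :&: f.
Hypothesis hE2 : forall u v, adj u v ->
         exists2 e, e \in hole_edges adj H & (u \in He e) && (v \in He e).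

Lemma edge_in x y : x \in H -> y \in H -> adj x y -> [set x; y] \in hole_edges adj H.
Proof.
move=> xH yH xy; apply/imset2P; exists x y => //.
by rewrite inE yH xy.
Qed.

Lemma E_H e z : e \in hole_edges adj H -> z \in e -> z \in H.
Proof.
move=> ein ze; have [_ _ ee] := hE ein.
by move: ze; rewrite -ee inE inE => /andP [].
Qed.

Lemma E_in e z : e \in hole_edges adj H -> z \in e -> z \in He e.
Proof.
move=> ein ze; have [_ /subsetP sb _] := hE ein.
by have := sb z ze; rewrite inE.
Qed.

Lemma E_int e z : e \in hole_edges adj H -> z \in H -> z \in He e -> z \in e.
Proof.
move=> ein zH zC; have [_ _ ee] := hE ein.
by rewrite -ee !inE zH zC.
Qed.

Lemma EF_int e e' z : e \in hole_edges adj H -> e' \in hole_edges adj H -> e != e' ->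
  z \in He e -> z \in He e' -> (z \in e) && (z \in e').
Proof.
move=> ein ein' ne z1 z2; have := hEF ein ein' ne.
move/setP => /(_ z); rewrite !inE z1 z2 /=.
by move=> <-.
Qed.

Lemma nbr e w z : e \in hole_edges adj H -> w \in He e -> w \notin H -> adj w z -> z \in He e.
Proof.
move=> ein wC wH wz; have [e' ein' /andP [w1 z1]] := hE2 wz.
case: (e =P e') => [->//|/eqP ne].
have /andP [we _] := EF_int ein ein' ne wC w1.
by move: wH; rewrite (E_H ein we).
Qed.


Lemma le2 m : 4 <= m -> 2 <= m.-2.
Proof. move=> h; nlia. Qed.

Lemma ear m t : lin adj H m t -> (exists w, [/\ w \in H, A (f (t 0)) (f w) & w <> t 0]) ->
  exists al, [/\ al \in He [set t 0; t 1], al \notin H, A (f al) (f (t 0)) & al <> t 0].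
Proof.
move=> lt hw.
have m4 := lin_m lt.
have [Pk arc1 arc2] := apex_lin lt hw.
have aH : t 0 \in H by apply: (lin_in lt); nlia.
have uH : t 1 \in H by apply: (lin_in lt); nlia.
have t2H : t 2 \in H by apply: (lin_in lt); nlia.
have au : adj (t 0) (t 1) by apply: (lin_next lt); nlia.
have ein : [set t 0; t 1] \in hole_edges adj H := edge_in aH uH au.
have [hC _ _] := hE ein.
have aC : t 0 \in He [set t 0; t 1] by apply: (E_in ein); rewrite set21.
have uC : t 1 \in He [set t 0; t 1] by apply: (E_in ein); rewrite set22.
have CH z : z \in He [set t 0; t 1] -> z \in H -> z = t 0 \/ z = t 1.
  move=> zC zH; have := E_int ein zH zC; rewrite in_set2 => /orP [/eqP ->|/eqP ->]; by [left|right].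
have [P2a P2b] := Pk 2 (leqnn 2) (le2 m4).
have noin : forall w, w \in He [set t 0; t 1] -> A (f (t 0)) (f w) -> w = t 0.
  move=> w wC aw; apply: NNPP => wa.
  have [m1 [s [ls s0 s1]]] := lin_edge Hsym Hirr hC aC uC au.
  have m14 := lin_m ls.
  have hw' : exists w, [/\ w \in He [set t 0; t 1], A (f (s 0)) (f w) & w <> s 0].
    by exists w; rewrite s0.
  have [Qk _ arcs2] := apex_lin ls hw'.
  have [zA za] := Qk 2 (leqnn 2) (le2 m14).
  rewrite s0 in zA za; rewrite s1 in arcs2.
  have zC : s 2 \in He [set t 0; t 1] by apply: (lin_in ls); nlia.
  have zH : s 2 \notin H.
    apply/negP => zH; case: (CH _ zC zH) => // e; move: e; rewrite -s1 => /(lin_inj ls); nlia.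
  have [h|h] := c_cmp arcs2 arc2.
  + apply: (esc lt zH h).
    * by move=> h'; apply: za; apply: finj; apply: A_antisym h' zA.
    * move=> p pH pz.
      have pC := nbr ein zC zH (_ : adj (s 2) p); rewrite Hsym in pC.
      case: (CH p (pC pz) pH) => // pa.
      by exfalso; move: pz; rewrite pa => /F1V [h' _]; apply: h'.
  + have t2C : t 2 \notin He [set t 0; t 1].
      by apply/negP => t2C; case: (CH _ t2C t2H) => /(lin_inj lt); nlia.
    apply: (esc ls t2C h).
    * by rewrite s0 => h'; apply: P2b; apply: finj; apply: A_antisym h' P2a.
    * move=> p pC pt2; rewrite s1.
      case: (boolP (p \in H)) => pH.
        case: (CH p pC pH) => // pa.
        by exfalso; move: pt2; rewrite pa => /F1V [h' _]; apply: h'.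
      by move: t2C; rewrite (nbr ein pC pH pt2).
have [al [be [alC beC albe Aab]]] := source hC.
case: (boolP (adj al (t 0))) => ala.
- have [m1 [s [ls s0 s1]]] := lin_edge Hsym Hirr hC alC aC ala.
  have m14 := lin_m ls.
  have hw' : exists w, [/\ w \in He [set t 0; t 1], A (f (s 0)) (f w) & w <> s 0].
    by exists be; rewrite s0; split => // e; apply: albe.
  have [Qk arcs1 _] := apex_lin ls hw'.
  rewrite s1 in arcs1.
  have [j jm sj] := lin_surj ls uC.
  have ad : adj (s j) (s 1) by rewrite sj s1 Hsym.
  have j1 : 1 < m1 by nlia.
  have hj := lin_nadj ls jm j1 ad.
  exfalso; apply: (tri arcs1 _ arc1).
  case: (j =P 0) => [j0|j0].
    by rewrite -sj j0; apply: A_refl.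
  rewrite -sj (_ : j = 2); last nlia.
  by have [h _] := Qk 2 (leqnn 2) (le2 m14).
- have ala' : al <> t 0.
    by move=> e; apply: albe; rewrite e; apply: esym; apply: noin => //; rewrite -e.
  have [m1 [s [ls s0]]] := lin_of_hole hC alC.
  have m14 := lin_m ls.
  have [j jm sj] := lin_surj ls aC.
  have j0 : j <> 0 by move=> e; apply: ala'; rewrite -s0 -sj e.
  have j1 : j <> 1.
    move=> e; move: ala; rewrite -s0 -sj e (lin_next ls) //; nlia.
  have jm1 : j <> m1.-1.
    move=> e; move: ala; rewrite -s0 -sj e Hsym -(lin_wrap ls).
    have mm : m1.-1 < m1 by nlia.
    have h := lin_next ls mm; rewrite prednK in h; last nlia.
    by rewrite h.
  have hw' : exists w, [/\ w \in He [set t 0; t 1], A (f (s 0)) (f w) & w <> s 0].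
    by exists be; rewrite s0; split => // e; apply: albe.
  have [Qk _ _] := apex_lin ls hw'.
  have [h1 h2] := Qk j ltac:(nlia) ltac:(nlia).
  rewrite s0 sj in h1 h2.
  exists al; split => //.
  apply/negP => alH; case: (CH _ alC alH) => // e.
  by move: ala; rewrite e Hsym au.
Qed.


Lemma final : False.
Proof.
have [al [be [alH beH albe Aab]]] := source hH.
have [m [t [lt t0]]] := lin_of_hole hH alH.
have m4 := lin_m lt.
have hw : exists w, [/\ w \in H, A (f (t 0)) (f w) & w <> t 0].
  by exists be; rewrite t0; split => // e; apply: albe.
have [a1 [a1C a1H A1 a1a]] := ear lt hw.
have lt' := lin_rev Hsym lt.
have [a2 [a2C a2H A2 a2a]] := ear lt' hw.
rewrite /= in a2C A2 a2a.
have aH : t 0 \in H by apply: (lin_in lt); nlia.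
have uH : t 1 \in H by apply: (lin_in lt); nlia.
have vH : t (m - 1) \in H by apply: (lin_in lt); nlia.
have au : adj (t 0) (t 1) by apply: (lin_next lt); nlia.
have av : adj (t 0) (t (m - 1)).
  have mm : m - 1 < m by nlia.
  have h := lin_next lt mm; rewrite (_ : (m - 1).+1 = m) in h; last nlia.
  by rewrite Hsym -(lin_wrap lt) h.
have e1in := edge_in aH uH au.
have e2in := edge_in aH vH av.
have uv : t 1 <> t (m - 1) by move=> /(lin_inj lt); nlia.
have ua : t 1 <> t 0 by move=> /(lin_inj lt); nlia.
have ne : [set t 0; t 1] != [set t 0; t (m - 1)].
  apply/eqP => E; have : t 1 \in [set t 0; t (m - 1)] by rewrite -E set22.
  by rewrite in_set2 => /orP [] /eqP.
have int : forall z, z \in [set t 0; t 1] -> z \in [set t 0; t (m - 1)] -> z = t 0.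
  move=> z; rewrite !in_set2 => /orP [/eqP //|/eqP ->] /orP [/eqP //|/eqP e].
  by exfalso; apply: uv.
have key : forall e e' x x', e \in hole_edges adj H -> e' \in hole_edges adj H -> e != e' ->
    t 0 \in e -> (forall z, z \in e -> z \in e' -> z = t 0) ->
    x \in He e -> x \notin H -> x' \in He e' -> x' \notin H -> A (f x') (f (t 0)) ->
    A (f x') (f x).
  move=> e e' x x' ein ein' nee ae hint xC xH xC' xH' Ax.
  have [hC _ _] := hE ein.
  have aC := E_in ein ae.
  have [m1 [s [ls s0]]] := lin_of_hole hC aC.
  have x'C : x' \notin He e.
    apply/negP => h; have /andP [h1 _] := EF_int ein ein' nee h xC'.
    by move: xH'; rewrite (E_H ein h1).
  have [j jm sj] := lin_surj ls xC.
  have h0 : A (f x') (f (s 0)) by rewrite s0.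
  have hp : forall p, p \in He e -> ~~ adj p x'.
    move=> p pC; apply/negP => px'.
    have pC' : p \in He e' by apply: (nbr ein' xC' xH'); rewrite Hsym.
    have /andP [pe pe'] := EF_int ein ein' nee pC pC'.
    have pa := hint p pe pe'.
    by move: px'; rewrite pa => /F1V [_ h]; apply: h.
  by rewrite -sj; apply: (sep ls x'C h0 hp jm).
have A21 := key _ _ _ _ e1in e2in ne (set21 _ _) int a1C a1H a2C a2H A2.
have int' : forall z, z \in [set t 0; t (m - 1)] -> z \in [set t 0; t 1] -> z = t 0.
  by move=> z h1 h2; apply: int.
have A12 := key _ _ _ _ e2in e1in (ltac:(by rewrite eq_sym) : [set t 0; t (m - 1)] != [set t 0; t 1]) (set21 _ _) int' a2C a2H a1C a1H A1.
have e12 : a1 = a2 by apply: finj; apply: A_antisym.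
have a1C2 : a1 \in He [set t 0; t (m - 1)] by rewrite e12.
have /andP [h1 _] := EF_int e1in e2in ne a1C a1C2.
by move: a1H; rewrite (E_H e1in h1).
Qed.

End Tree.

Theorem lemma7p1 (V : finType) (adj : rel V) :
  symmetric adj -> irreflexive adj -> flower adj -> ~ burling_graph adj.
Proof.
move=> Hsym Hirr [H [He [hH hE hEF _ hE2]]] [U [r [par [l [c [[Hr Hreach Hl Hc0 Hc] [f [finj hadj]]]]]]]].
exact: (final Hr Hreach Hl Hc0 Hc Hsym Hirr finj hadj hH hE hEF hE2).
Qed.
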